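(* Let $n,s,g,l$ satisfy $s>1$ and $l\le sg$. Then every $n$-vertex graph satisfying $S(s,g)$ and $L(l)$ has diameter at most $2\ln n/\ln s+3$.
   Context: For a vertex set $A$ of a graph $G$, $N(A)$ is the set of vertices outside $A$ having at least one neighbor in $A$. $G$ satisfies $S(s,g)$ if every $A\subseteq V(G)$ with $|A|\le g$ has $|N(A)|\ge s|A|$. $G$ satisfies $L(l)$ if there is an edge between any two disjoint sets $A,B\subseteq V(G)$ with $|A|,|B|\ge l$. The diameter is the maximum over all pairs of vertices of the length of a shortest path between them. *)

(* Defs.v *)
From mathcomp Require Import all_boot.
From Stdlib Require Import Reals.
Set Implicit Arguments. Unset Strict Implicit. Unset Printing Implicit Defensive.

Definition simple_graph (T : finType) (e : rel T) : Prop :=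
  symmetric e /\ irreflexive e.

Definition nbhd (T : finType) (e : rel T) (A : {set T}) : {set T} :=
  [set v | (v \notin A) && [exists u in A, e u v]].

Definition propS (T : finType) (e : rel T) (s : R) (g : nat) : Prop :=
  forall A : {set T}, (#|A| <= g)%N ->
    (s * INR #|A| <= INR #|nbhd e A|)%R.

Definition propL (T : finType) (e : rel T) (l : nat) : Prop :=
  forall A B : {set T}, [disjoint A & B] -> (l <= #|A|)%N -> (l <= #|B|)%N ->
    exists u v, [/\ u \in A, v \in B & e u v].

(* dist(x,y) <= d : there is a walk x = v0, v1, ..., vk = y with k <= d. *)
Definition dist_le (T : finType) (e : rel T) (x y : T) (d : R) : Prop :=
  exists p : seq T, [/\ path e x p, last x p = y & (INR (size p) <= d)%R].

(* diameter <= d : every pair of vertices is at distance <= d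
   (a disconnected graph has infinite diameter). *)
Definition diameter_le (T : finType) (e : rel T) (d : R) : Prop :=
  forall x y : T, dist_le e x y d.

(* Main.v *)
Require Import Defs.
From mathcomp Require Import all_boot.
From Stdlib Require Import Reals Lra.
From Stdlib Require ZArith.

Section G.
Variables (T : finType) (e : rel T).

Fixpoint ball (x : T) (k : nat) : {set T} :=
  match k with 0 => [set x] | k'.+1 => ball x k' :|: nbhd e (ball x k') end.

Lemma ball_from x k y : y \in ball x k ->
  exists p, [/\ path e x p, last x p = y & (size p <= k)%N].
Proof.
elim: k y => [|k IH] y /=.
  by rewrite inE => /eqP ->; exists [::].
case/setUP => [/IH [p [H1 H2 H3]]|]; first by exists p; split => //; rewrite ltnW.
rewrite inE => /andP [_ /existsP [u /andP [Hu Huy]]].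
have [p [H1 H2 H3]] := IH _ Hu.
exists (rcons p y); rewrite rcons_path last_rcons size_rcons H1 H2 Huy; split => //.
Qed.

Lemma ball_to x k y : symmetric e -> y \in ball x k ->
  exists p, [/\ path e y p, last y p = x & (size p <= k)%N].
Proof.
move=> sym; elim: k y => [|k IH] y /=.
  by rewrite inE => /eqP ->; exists [::].
case/setUP => [/IH [p [H1 H2 H3]]|]; first by exists p; split => //; rewrite ltnW.
rewrite inE => /andP [_ /existsP [u /andP [Hu Huy]]].
have [p [H1 H2 H3]] := IH _ Hu.
exists (u :: p); rewrite /= H1 H2 sym Huy; split => //.
Qed.

Lemma ball_sub x k : ball x k \subset ball x k.+1.
Proof. exact: subsetUl. Qed.

Lemma card_grow (A : {set T}) : #|A :|: nbhd e A| = (#|A| + #|nbhd e A|)%N.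
Proof.
rewrite -cardsUI.
suff -> : A :&: nbhd e A = set0 by rewrite cards0 addn0.
apply/setP => y; rewrite !inE.
by case: (y \in A).
Qed.

Lemma sub_card (A : {set T}) n : (n <= #|A|)%N -> exists B : {set T}, B \subset A /\ #|B| = n.
Proof.
elim: n => [|n IH] H; first by exists set0; rewrite sub0set cards0.
have [B [HB HBc]] := IH (ltnW H).
have : ~~ (A \subset B).
  apply/negP => /subset_leq_card; rewrite HBc. by rewrite leqNgt H.
case/subsetPn => x xA xB.
exists (x |: B); rewrite cardsU1 xB HBc; split => //.
by rewrite subUset sub1set xA HB.
Qed.

End G.
Arguments ball {T} e x k.
Arguments ball_sub {T}.
Arguments ball_from {T e x k y}.
Arguments ball_to {T e x k y}.

Section R.
Variables (T : finType) (e : rel T) (s : R) (g l : nat).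
Hypothesis (s1 : (1 < s)%R) (Hl : (INR l <= s * INR g)%R) (HS : propS e s g).

Lemma grow1 (A : {set T}) : (#|A| <= g)%N ->
  ((1 + s) * INR #|A| <= INR #|A :|: nbhd e A|)%R.
Proof. move=> H; rewrite card_grow plus_INR; have := HS _ H; lra. Qed.

Lemma grow2 (A : {set T}) : (g <= #|A|)%N -> (INR l <= INR #|A :|: nbhd e A|)%R.
Proof.
move=> H; have [B [HB HBc]] := @sub_card _ A g H.
have Hs : B :|: nbhd e B \subset A :|: nbhd e A.
  apply/subsetP => y; rewrite !inE => /orP [yB|/andP [yB /existsP [u /andP [uB uy]]]].
    by rewrite (subsetP HB _ yB).
  case yA: (y \in A) => //=; apply/existsP; exists u; by rewrite (subsetP HB _ uB).
have h0 := le_INR _ _ (leP (subset_leq_card Hs)).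
have h1 := HS B (eq_leq HBc). have h2 := pos_INR #|B|.
rewrite card_grow plus_INR in h0; rewrite HBc in h0 h1 h2; lra.
Qed.

Lemma ball_bound x k : (INR l <= INR #|ball e x k| \/ s ^ k <= INR #|ball e x k|)%R.
Proof.
elim: k => [|k IH] /=.
  by right; rewrite cards1 /=; lra.
have Hm : (INR #|ball e x k| <= INR #|ball e x k :|: nbhd e (ball e x k)|)%R.
  by apply: le_INR; apply/leP; apply: subset_leq_card; apply: subsetUl.
case: (leqP #|ball e x k| g) => Hg; last by left; apply: grow2; apply: ltnW.
have := grow1 (ball e x k) Hg; case: IH => IH; first by left; lra.
right; have := pos_INR #|ball e x k|; nra.
Qed.
End R.
Arguments ball_bound {T e s g l}.

Theorem mainTheorem3 (T : finType) (e : rel T) (s : R) (g l : nat) :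
  simple_graph e -> (1 < s)%R -> (INR l <= s * INR g)%R ->
  propS e s g -> propL e l ->
  diameter_le e (2 * ln (INR #|T|) / ln s + 3)%R.
Proof.
move=> [sym irr] s1 Hl HS HL x y.
set n := INR #|T|.
have n1 : (1 <= n)%R.
  rewrite /n; have : (0 < #|T|)%N by apply/card_gt0P; exists x.
  by move/leP/le_INR.
have lns : (0 < ln s)%R by rewrite -ln_1; apply: ln_increasing; lra.
have lnn : (0 <= ln n)%R.
  case: (Rle_lt_or_eq_dec _ _ n1) => h; last by rewrite -h ln_1; lra.
  by rewrite -ln_1; left; apply: ln_increasing; lra.
set r := (ln n / ln s)%R.
have r0 : (0 <= r)%R by rewrite /r; apply: Rmult_le_pos => //; left; apply: Rinv_0_lt_compat.
have [ar1 ar2] := archimed r.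
set k := Z.to_nat (up r).
have Hk : INR k = IZR (up r).
  rewrite /k INR_IZR_INZ Znat.Z2Nat.id //; apply: le_IZR; lra.
have Hsk : (n < s ^ k)%R.
  rewrite -Rpower_pow; last lra.
  rewrite /Rpower -{1}(exp_ln n); last lra.
  apply: exp_increasing.
  have -> : ln n = (r * ln s)%R by rewrite /r; field; lra.
  rewrite Hk; apply: Rmult_lt_compat_r => //.
have big z : (l <= #|ball e z k|)%N.
  have : (INR #|ball e z k| <= n)%R by apply: le_INR; apply/leP; apply: max_card.
  case: (ball_bound s1 Hl HS z k) => h; last lra.
  by move=> _; apply/leP; apply: INR_le.
have [w [w1 w2]] : exists w, w \in ball e x k.+1 /\ w \in ball e y k.
  case D: [disjoint ball e x k & ball e y k].
    have [u [v [uB vB uv]]] := HL _ _ D (big x) (big y).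
    exists v; split => //=; apply/setUP.
    case vx: (v \in ball e x k); first by left.
    by right; rewrite inE vx /=; apply/existsP; exists u; rewrite uB uv.
  move/negbT: D; rewrite -setI_eq0 => /set0Pn [w]; rewrite inE => /andP [wx wy].
  by exists w; split => //; apply: (subsetP (ball_sub e x k)).
have [p1 [P1 L1 S1]] := ball_from w1.
have [p2 [P2 L2 S2]] := ball_to sym w2.
exists (p1 ++ p2); rewrite cat_path last_cat P1 L1 P2 L2; split => //.
apply: (Rle_trans _ (INR (k.+1 + k))).
  by apply: le_INR; apply/leP; rewrite size_cat; apply: leq_add.
rewrite plus_INR S_INR Hk.
have -> : (2 * ln n / ln s = 2 * r)%R by rewrite /r; field; lra.
lra.
Qed.
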